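(* For each $k\in\mathbb{N}$ there exists an instance of the Strip Packing Problem (together with an initial ordering) such that the bottom-left $k$-local search algorithm takes a number of improvement steps that is exponential with respect to the instance size before reaching a local optimum.
   Context: Strip Packing Problem: given a strip width $W>0$ and rectangles $r_1,\dots,r_n$ with widths $w_i\le W$ and heights $h_i$, a packing assigns to each $r_i$ a lower-left corner $(x_i,y_i)$; it is feasible if $x_i\ge 0$, $x_i+w_i\le W$, $y_i\ge 0$ and the open rectangles $(x_i,x_i+w_i)\times(y_i,y_i+h_i)$ are pairwise disjoint; no rotations. The height of a packing is $\max_i(y_i+h_i)$. Bottom-left algorithm: given an ordering, place the first rectangle at $(0,0)$ and then each subsequent rectangle at a feasible position $(x,y)$ (feasible together with those already placed) with $(y,x)$ lexicographically minimal. Bottom-left $k$-local search algorithm: start with an initial ordering and its bottom-left packing. In each iteration (improvement step), choose a new ordering obtained from the current one by permuting at most $k$ rectangles in the ordering such that the bottom-left packing of the new ordering has strictly smaller height, and replace the current ordering by it. Stop when no such improvement exists (a local optimum). *)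

(* Defs.v *)
From HB Require Import structures.
From mathcomp Require Import all_boot all_order all_algebra.
From mathcomp Require Import fingroup perm reals.
Set Implicit Arguments. Unset Strict Implicit. Unset Printing Implicit Defensive.
Import Order.TTheory GRing.Theory Num.Theory.
Local Open Scope ring_scope.

Section StripPacking.
Variables (R : realType) (n : nat) (W : R) (w h : 'I_n -> R).

Definition in_open_rect (i : 'I_n) (p : R * R) (a b : R) : Prop :=
  p.1 < a < p.1 + w i /\ p.2 < b < p.2 + h i.

Definition feasible_pos (placed : pred 'I_n) (pos : 'I_n -> R * R)
    (i : 'I_n) (p : R * R) : Prop :=
  [/\ 0 <= p.1, p.1 + w i <= W, 0 <= p.2 &
      forall j, placed j -> j != i ->
        ~ (exists a b, in_open_rect i p a b /\ in_open_rect j (pos j) a b)].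

Definition lex_yx_le (p q : R * R) : Prop :=
  p.2 < q.2 \/ (p.2 = q.2 /\ p.1 <= q.1).

(* pos is the bottom-left packing for the ordering s : position t of the
   ordering holds rectangle s t; it is placed at a feasible position (w.r.t.
   the rectangles earlier in the ordering) that is (y,x)-lexicographically
   minimal among all such feasible positions. *)
Definition is_BL_packing (s : {perm 'I_n}) (pos : 'I_n -> R * R) : Prop :=
  forall t : 'I_n,
    let placed := [pred j : 'I_n | (nat_of_ord ((s^-1)%g j) < nat_of_ord t)%N] in
    feasible_pos placed pos (s t) (pos (s t)) /\
    forall p, feasible_pos placed pos (s t) p -> lex_yx_le (pos (s t)) p.

Definition packing_height (pos : 'I_n -> R * R) : R :=
  \big[Num.max/0]_(i < n) ((pos i).2 + h i).

Definition BL_height (s : {perm 'I_n}) (H : R) : Prop :=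
  exists pos, is_BL_packing s pos /\ packing_height pos = H.

Definition improvement_step (k : nat) (s s' : {perm 'I_n}) : Prop :=
  (#|[pred t : 'I_n | s t != s' t]| <= k)%N /\
  exists H H', [/\ BL_height s H, BL_height s' H' & H' < H].

Definition local_optimum (k : nat) (s : {perm 'I_n}) : Prop :=
  forall s', ~ improvement_step k s s'.

Definition local_search_run (k : nat) (s0 : {perm 'I_n})
    (f : nat -> {perm 'I_n}) (L : nat) : Prop :=
  [/\ f 0%N = s0,
      forall i, (i < L)%N -> improvement_step k (f i) (f i.+1) &
      local_optimum k (f L)].

Definition valid_instance : Prop :=
  0 < W /\ forall i, 0 < w i /\ w i <= W /\ 0 < h i.

End StripPacking.

(* Main.v *)
Require Import Defs.
From HB Require Import structures.
From mathcomp Require Import all_boot all_order all_algebra.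
From mathcomp Require Import fingroup perm reals.
From mathcomp Require Import zify ring lra.
Set Implicit Arguments. Unset Strict Implicit. Unset Printing Implicit Defensive.
Import Order.TTheory GRing.Theory Num.Theory.
Local Open Scope ring_scope.

Section Generic.
Variables (R : realType) (n : nat) (h : 'I_n -> R).
Hypothesis hpos : forall i, 0 < h i.
Variable s : {perm 'I_n}.
Local Notation si := (s^-1)%g.

Definition W2 : R := 2.
Definition w1 : 'I_n -> R := fun _ => 1.

Definition stepL (l : R * R) (p : R) : R * R :=
  if l.2 < l.1 then (l.1, l.2 + p) else (l.1 + p, l.2).
Definition hs := [seq h (s u) | u <- enum 'I_n].
Definition loads (t : nat) := foldl stepL (0, 0) (take t hs).
Definition ld (c : bool) (l : R * R) := if c then l.2 else l.1.
Definition colb (i : 'I_n) := let l := loads (si i) in l.2 < l.1.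
Definition px (i : 'I_n) : R := if colb i then 1 else 0.
Definition py (i : 'I_n) : R := ld (colb i) (loads (si i)).
Arguments px : simpl never.
Arguments py : simpl never.
Definition posE (i : 'I_n) : R * R := (px i, py i).

Lemma loadsS (t : 'I_n) : loads t.+1 = stepL (loads t) (h (s t)).
Proof.
rewrite /loads (take_nth (h (s t))); last by rewrite size_map size_enum_ord.
by rewrite foldl_rcons (nth_map t) ?size_enum_ord // nth_ord_enum.
Qed.

Lemma ld_step c l p : ld c (stepL l p) = if c == (l.2 < l.1) then ld c l + p else ld c l.
Proof. by rewrite /stepL; case: c; case: (l.2 < l.1). Qed.

Definition Inv (t : nat) : Prop :=
  [/\ 0 <= (loads t).1, 0 <= (loads t).2,
   (forall j, (si j < t)%N -> 0 <= (posE j).2 /\ (posE j).2 + h j <= ld (colb j) (loads t)),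
   (forall c b, 0 <= b < ld c (loads t) -> exists j, [/\ (si j < t)%N, colb j = c &
        (posE j).2 <= b < (posE j).2 + h j]) &
   (forall c, ld c (loads t) = 0 \/ exists j, [/\ (si j < t)%N, colb j = c &
        (posE j).2 + h j = ld c (loads t)])].

Lemma Inv0 : Inv 0.
Proof.
rewrite /Inv /loads take0 /=; split => //.
- by move=> c b; case: c => /=; rewrite le_lt_asym ?andbF // => /andP [] /le_lt_trans H /H; rewrite ltxx.
- by move=> c; left; case: c.
Qed.

Lemma placedS (t0 : 'I_n) j : (si j < t0.+1)%N = (si j < t0)%N || (j == s t0).
Proof.
rewrite ltnS leq_eqVlt orbC; congr (_ || _).
apply/eqP/eqP => [H|->]; last by rewrite permK.
have H' : si j = t0 by apply: val_inj.
by rewrite -H' permKV.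
Qed.

Lemma colb_s (t0 : 'I_n) : colb (s t0) = ((loads t0).2 < (loads t0).1).
Proof. by rewrite /colb permK. Qed.

Lemma posE_s (t0 : 'I_n) : (posE (s t0)).2 = ld (colb (s t0)) (loads t0).
Proof. by rewrite /posE /py /= permK. Qed.

Lemma InvS (t0 : 'I_n) : Inv t0 -> Inv t0.+1.
Proof.
case=> [H1 H2 H3 H4 H5].
have hi := hpos (s t0).
have Ec c : ld c (loads t0.+1) = if c == colb (s t0) then ld c (loads t0) + h (s t0) else ld c (loads t0).
  by rewrite loadsS ld_step colb_s.
have Hge c : ld c (loads t0) <= ld c (loads t0.+1).
  by rewrite Ec; case: eqP => _ //; rewrite lerDl ltW.
split.
- have := Hge false; rewrite /= => H; exact: le_trans H1 H.
- have := Hge true; rewrite /= => H; exact: le_trans H2 H.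
- move=> j; rewrite placedS => /orP [/H3 [A B]|/eqP ->].
    by split => //; apply: le_trans B (Hge _).
  rewrite posE_s Ec eqxx; split => //.
  by case: (colb _) => /=.
- move=> c b; rewrite Ec; case: eqP => [Hc|Hc] Hb.
  + case: (ltP b (ld c (loads t0))) => Hb2.
      have /H4 [j [J1 J2 J3]] : 0 <= b < ld c (loads t0) by rewrite Hb2 andbT; case/andP: Hb.
      by exists j; split => //; rewrite placedS J1.
    exists (s t0); split; first by rewrite placedS eqxx orbT.
      by rewrite Hc.
    by rewrite posE_s -Hc Hb2; case/andP: Hb.
  + have /H4 [j [J1 J2 J3]] := Hb.
    by exists j; split => //; rewrite placedS J1.
- move=> c; rewrite Ec; case: eqP => [Hc|Hc].
    right; exists (s t0); split; first by rewrite placedS eqxx orbT.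
      by rewrite Hc.
    by rewrite posE_s Hc.
  case: (H5 c) => [->|[j [J1 J2 J3]]]; first by left.
  by right; exists j; split => //; rewrite placedS J1.
Qed.

Lemma Inv_all t : (t <= n)%N -> Inv t.
Proof.
elim: t => [|t IH] Ht; first exact: Inv0.
have Ht' : (t < n)%N by [].
exact: (@InvS (Ordinal Ht') (IH (ltnW Ht'))).
Qed.

Lemma lexI (x y : R) (p : R * R) : y <= p.2 -> (y = p.2 -> x <= p.1) -> lex_yx_le (x, y) p.
Proof.
rewrite /lex_yx_le /= le_eqVlt => /orP [/eqP E H|H]; last by left.
by right; split => //; apply: H.
Qed.

Lemma BL_posE : is_BL_packing W2 w1 h s posE.
Proof.
move=> t placed.
have [H1 H2 H3 H4 H5] := Inv_all (ltnW (ltn_ord t)).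
have Hst : ~~ placed (s t) by rewrite /placed /= permK ltnn.
have Hy : (posE (s t)).2 = ld (colb (s t)) (loads t) by rewrite posE_s.
have Hx : (posE (s t)).1 = if colb (s t) then 1 else 0 by rewrite /= /px.
have Hnn : forall c, 0 <= ld c (loads t) by case.
have hst := hpos (s t).
split.
  split.
  - by rewrite Hx; case: (colb _).
  - by rewrite Hx /w1; case: (colb _) => /=; lra.
  - by rewrite Hy.
  move=> j Pj Nj [a [b [[/andP [Ha1 Ha2] /andP [Hb1 Hb2]] [/andP [Ha3 Ha4] /andP [Hb3 Hb4]]]]].
  have [J1 J2] := H3 j Pj.
  move: Ha1 Ha2 Ha3 Ha4 Hb1 Hb2 Hb3 Hb4; rewrite /w1.
  have Exj : (posE j).1 = if colb j then 1 else 0 by rewrite /= /px.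
  move: J2 Hy Exj Hx.
  case: (colb j); case: (colb (s t)) => /= J2 Hy Exj Hx A1 A2 A3 A4 B1 B2 B3 B4; lra.
move=> p [P1 P2 P3 P4].
have claim : forall c' : bool, (c' -> 1 <= p.1) -> (~~ c' -> p.1 < 1) -> ld c' (loads t) <= p.2.
  move=> c' Hc1 Hc2; rewrite leNgt; apply/negP => Hlt.
  have /H4 [j [J1 J2 J3]] : 0 <= p.2 < ld c' (loads t) by rewrite P3 Hlt.
  have Nj : j != s t by apply: contraNneq Hst => <-.
  apply: (P4 j J1 Nj).
  move: J3 => /andP [J3 J4].
  have hj := hpos j.
  have Exj : (posE j).1 = if c' then 1 else 0 by rewrite /= /px J2.
  have [a [Ha1 Ha2 Ha3 Ha4]] : exists a, [/\ p.1 < a, a < p.1 + 1, (posE j).1 < a & a < (posE j).1 + 1].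
    case: c' Hc1 Hc2 Exj {J2 Hlt} => Hc1 Hc2 Exj.
      have := Hc1 isT => Hp1; exists (3/2); rewrite Exj; move: P2; rewrite /w1 /W2 => P2; split; lra.
    have := Hc2 isT => Hp1; exists ((p.1 + 1)/2); rewrite Exj; split; lra.
  have [b [Hb1 Hb2 Hb3 Hb4]] : exists b, [/\ p.2 < b, b < p.2 + h (s t), (posE j).2 < b & b < (posE j).2 + h j].
    have [Hm|Hm] := leP (h (s t)) ((posE j).2 + h j - p.2).
      exists (p.2 + h (s t) / 2); split; lra.
    exists ((p.2 + ((posE j).2 + h j)) / 2); split; lra.
  exists a, b; rewrite /in_open_rect /w1.
  by rewrite Ha1 Ha2 Ha3 Ha4 Hb1 Hb2 Hb3 Hb4.
have P2' : p.1 <= 1 by move: P2; rewrite /w1 /W2; lra.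
have [Hp|Hp] := ltP p.1 1.
  have C0 := claim false (fun H => ltac:(done)) (fun _ => Hp).
  case Ec: (colb (s t)) Hy Hx => Hy Hx.
    move: Ec; rewrite colb_s => Ec.
    rewrite [posE _]surjective_pairing Hy Hx; apply: lexI => /=; move: C0 Ec => /=; lra.
  move: Ec; rewrite colb_s => /negbT; rewrite -leNgt => Ec.
  rewrite [posE _]surjective_pairing Hy Hx; apply: lexI => /=; move: C0 Ec => /=; lra.
have C1 := claim true (fun _ => Hp) (fun H => ltac:(done)).
case Ec: (colb (s t)) Hy Hx => Hy Hx.
  move: Ec; rewrite colb_s => Ec.
  rewrite [posE _]surjective_pairing Hy Hx; apply: lexI => /=; move: C1 Ec => /=; lra.
move: Ec; rewrite colb_s => /negbT; rewrite -leNgt => Ec.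
rewrite [posE _]surjective_pairing Hy Hx; apply: lexI => /=; move: C1 Ec => /=; lra.
Qed.

Lemma bigmax_ge (F : 'I_n -> R) (r : seq 'I_n) i0 : i0 \in r ->
  F i0 <= \big[Num.max/0]_(i <- r) F i.
Proof.
elim: r => // a r IH; rewrite in_cons big_cons le_max => /orP [/eqP ->|/IH ->].
  by rewrite lexx.
by rewrite orbT.
Qed.

Lemma bigmax_eq (F : 'I_n -> R) (M : R) : 0 <= M -> (forall i, F i <= M) ->
  (M = 0 \/ exists i, F i = M) -> \big[Num.max/0]_(i < n) F i = M.
Proof.
move=> HM HF HE; apply/le_anti/andP; split.
  by apply: (big_ind (fun x => x <= M)) => // x y Hx Hy; rewrite ge_max Hx Hy.
case: HE => [->|[i <-]].
  elim: (index_enum _) => [|a r IH]; first by rewrite big_nil.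
  by rewrite big_cons le_max IH orbT.
exact: bigmax_ge (mem_index_enum _).
Qed.

Definition absd (d p : R) := `|d - p|.
Definition Dl (l : seq R) := foldl absd 0 l.
Definition BLf := ((\sum_(p <- hs) p) + Dl hs) / 2.

Lemma fold_stepL (l : seq R) x y : 
  let r := foldl stepL (x, y) l in
  r.1 + r.2 = x + y + \sum_(p <- l) p /\ `|r.1 - r.2| = foldl absd `|x - y| l.
Proof.
elim: l x y => [|p l IH] x y /=; first by rewrite big_nil addr0.
rewrite big_cons /stepL; case: ifP => H /=.
  have [-> ->] := IH x (y + p); split; first by ring.
  congr foldl; rewrite /absd (gtr0_norm (x := x - y)) ?subr_gt0 //; congr `|_|; ring.
have [-> ->] := IH (x + p) y; split; first by ring.
move: H => /negbT; rewrite -leNgt => H.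
congr foldl; rewrite /absd (ler0_norm (x := x - y)) ?subr_le0 //.
by rewrite -normrN; congr `|_|; ring.
Qed.

Lemma max_formula (a b : R) : Num.max a b = (a + b + `|a - b|) / 2.
Proof.
by case: lerP => H; field.
Qed.

Lemma height_posE : packing_height h posE = BLf.
Proof.
have [H1 H2 H3 H4 H5] := Inv_all (leqnn n).
have Hl : loads n = foldl stepL (0, 0) hs by rewrite /loads take_oversize // size_map size_enum_ord.
rewrite /packing_height (@bigmax_eq _ (Num.max (loads n).1 (loads n).2)).
- rewrite max_formula /BLf /Dl Hl.
  by have /= [-> ->] := fold_stepL hs 0 0; rewrite subr0 normr0 !add0r.
- by rewrite le_max H1.
- move=> i; have [_ ] := H3 i (ltn_ord _).
  by case: (colb i) => /= Hi; rewrite le_max Hi ?orbT.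
- have [Hm|Hm] := leP (loads n).1 (loads n).2.
    case: (H5 true) => /= [->|[j [_ _ Hj]]]; [by left|by right; exists j].
  case: (H5 false) => /= [->|[j [_ _ Hj]]]; [by left|by right; exists j].
Qed.

Lemma BL_unique pos1 pos2 : is_BL_packing W2 w1 h s pos1 -> is_BL_packing W2 w1 h s pos2 ->
  forall i, pos1 i = pos2 i.
Proof.
move=> B1 B2.
suff : forall t i, (si i < t)%N -> pos1 i = pos2 i.
  by move=> H i; apply: (H n); rewrite ltn_ord.
elim=> [//|t IH] i; rewrite ltnS leq_eqVlt => /orP [/eqP Ht|/IH //].
have Hi : i = s (si i) by rewrite permKV.
have [F1 M1] := B1 (si i); have [F2 M2] := B2 (si i).
rewrite -Hi in F1 M1 F2 M2.
have Eq : forall j, (si j < si i)%N -> pos1 j = pos2 j by move=> j; rewrite Ht; apply: IH.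
have T12 : forall p, feasible_pos W2 w1 h [pred j | (si j < si i)%N] pos1 i p ->
                     feasible_pos W2 w1 h [pred j | (si j < si i)%N] pos2 i p.
  move=> p [A B C D]; split => // j Pj Nj; rewrite -Eq //; exact: D.
have T21 : forall p, feasible_pos W2 w1 h [pred j | (si j < si i)%N] pos2 i p ->
                     feasible_pos W2 w1 h [pred j | (si j < si i)%N] pos1 i p.
  move=> p [A B C D]; split => // j Pj Nj; rewrite Eq //; exact: D.
have L12 := M1 _ (T21 _ F2); have L21 := M2 _ (T12 _ F1).
move: L12 L21; rewrite /lex_yx_le.
case: (pos1 i) => a1 b1; case: (pos2 i) => a2 b2 /=.
case=> [H|[E H]]; case=> [H'|[E' H']].
- by move: (lt_trans H H'); rewrite ltxx.
- by move: H; rewrite E' ltxx.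
- by move: H'; rewrite E ltxx.
- by rewrite E; congr pair; apply/le_anti; rewrite H H'.
Qed.

Lemma BL_height_iff H : BL_height W2 w1 h s H <-> H = BLf.
Proof.
split.
  case=> pos [B <-]; rewrite -height_posE /packing_height.
  by apply: eq_bigr => i _; rewrite (BL_unique B BL_posE).
by move=> ->; exists posE; split; [exact: BL_posE|exact: height_posE].
Qed.

End Generic.

Arguments absd {R}.
Arguments Dl {R}.

Lemma sum_hs (R : realType) n (F : 'I_n -> R) (s : {perm 'I_n}) :
  \sum_(p <- hs F s) p = \sum_i F i.
Proof. by rewrite /hs big_map (reindex_inj (@perm_inj _ s)) /= -big_enum. Qed.

Section Instance.
Variables (R : realType) (m : nat).
Local Notation M := m.+1.
Local Notation n := (2 * M).+1.

Definition Aval : R := 3 * 2 ^+ M.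
Definition hn (t : nat) : R :=
  if (t == 2 * M)%N then Aval else if (t %% 2 == 1)%N then 2 ^+ (t %/ 2)%N else 2 * 2 ^+ (t %/ 2)%N.
Definition hI (i : 'I_n) : R := hn i.

Lemma hn_pos t : 0 < hn t.
Proof.
rewrite /hn /Aval; case: eqP => _; first by rewrite mulr_gt0 ?exprn_gt0.
by case: eqP => _; rewrite ?mulr_gt0 ?exprn_gt0.
Qed.

Definition flipn (sg : nat -> bool) (t : nat) : nat :=
  if (t < 2 * M)%N && sg (t %/ 2)%N then (if (t %% 2 == 1)%N then t.-1 else t.+1) else t.

Lemma flipn_lt sg t : (t < n)%N -> (flipn sg t < n)%N.
Proof. rewrite /flipn; case: ifP => // /andP [H _]; case: (boolP (t %% 2 == 1)%N) => /eqP E; lia. Qed.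

Lemma flipnK sg t : flipn sg (flipn sg t) = t.
Proof.
rewrite /flipn; case Hb: ((t < 2 * M)%N && sg (t %/ 2)%N); last by rewrite /= Hb.
move/andP: Hb => [H1 H2].
case: (boolP (t %% 2 == 1)%N) => /eqP E /=.
  have -> : (t.-1 %/ 2 = t %/ 2)%N by lia.
  rewrite H2 andbT; have -> : (t.-1 < 2 * M)%N by lia.
  have -> : (t.-1 %% 2 == 1)%N = false by apply/eqP; lia.
  lia.
have -> : (t.+1 %/ 2 = t %/ 2)%N by lia.
rewrite H2 andbT; have -> : (t.+1 < 2 * M)%N by lia.
have -> : (t.+1 %% 2 == 1)%N = true by apply/eqP; lia.
done.
Qed.

Definition flipo sg (t : 'I_n) : 'I_n := Ordinal (flipn_lt sg (ltn_ord t)).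
Lemma flipoK sg : cancel (flipo sg) (flipo sg).
Proof. by move=> t; apply: val_inj => /=; rewrite flipnK. Qed.
Definition sP sg : {perm 'I_n} := perm (can_inj (flipoK sg)).

Lemma hs_sP sg : hs hI (sP sg) = [seq hn (flipn sg t) | t <- iota 0 n].
Proof.
rewrite /hs -val_enum_ord -map_comp; apply: eq_map => u /=.
by rewrite /hI permE.
Qed.

Fixpoint gv (i : nat) (sg : nat -> bool) : R :=
  if i is i'.+1 then 2 ^+ i' + (if sg i' then gv i' sg else - gv i' sg) else 0.

Lemma gv_bound i sg : 0 <= gv i sg < 2 ^+ i.
Proof.
elim: i => [|i IH] /=; first by rewrite lexx ltr01.
move: IH => /andP [H1 H2]; have P : 0 < (2 : R) ^+ i by rewrite exprn_gt0.
rewrite exprS; case: (sg i); apply/andP; split; lra.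
Qed.

Lemma gv_pos i sg : 0 < gv i.+1 sg.
Proof.
have /andP [H1 H2] := gv_bound i sg; rewrite /=; case: (sg i); lra.
Qed.

Lemma gv_ext i sg sg' : (forall x, (x < i)%N -> sg x = sg' x) -> gv i sg = gv i sg'.
Proof.
elim: i => [//|i IH] E /=.
rewrite E // IH // => x Hx; apply: E; lia.
Qed.

Lemma absd_le (a b : R) : a <= b -> absd a b = b - a.
Proof. by move=> H; rewrite /absd ler0_norm ?subr_le0 // opprB. Qed.
Lemma absd_ge (a b : R) : b <= a -> absd a b = a - b.
Proof. by move=> H; rewrite /absd ger0_norm ?subr_ge0. Qed.

Lemma hn_even i : (i < M)%N -> hn (2 * i) = 2 * 2 ^+ i.
Proof.
move=> H; rewrite /hn; have -> : (2 * i == 2 * M)%N = false by apply/eqP; lia.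
have -> : (2 * i %% 2 == 1)%N = false by apply/eqP; lia.
by have -> : (2 * i %/ 2 = i)%N by lia.
Qed.

Lemma hn_odd i : (i < M)%N -> hn (2 * i).+1 = 2 ^+ i.
Proof.
move=> H; rewrite /hn; have -> : ((2 * i).+1 == 2 * M)%N = false by apply/eqP; lia.
have -> : ((2 * i).+1 %% 2 == 1)%N = true by apply/eqP; lia.
by have -> : ((2 * i).+1 %/ 2 = i)%N by lia.
Qed.

Lemma flipn_even sg i : (i < M)%N -> flipn sg (2 * i) = if sg i then (2 * i).+1 else (2 * i)%N.
Proof.
move=> H; rewrite /flipn; have -> : (2 * i %/ 2 = i)%N by lia.
have -> : (2 * i < 2 * M)%N by lia.
have -> : (2 * i %% 2 == 1)%N = false by apply/eqP; lia.
by case: (sg i).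
Qed.

Lemma flipn_odd sg i : (i < M)%N -> flipn sg (2 * i).+1 = if sg i then (2 * i)%N else (2 * i).+1.
Proof.
move=> H; rewrite /flipn; have -> : ((2 * i).+1 %/ 2 = i)%N by lia.
have -> : ((2 * i).+1 < 2 * M)%N by lia.
have -> : ((2 * i).+1 %% 2 == 1)%N = true by apply/eqP; lia.
by case: (sg i).
Qed.

Lemma flipn_last sg : flipn sg (2 * M) = (2 * M)%N.
Proof. by rewrite /flipn ltnn. Qed.

Lemma iota_pair i : iota 0 (2 * i.+1) = iota 0 (2 * i) ++ [:: (2 * i)%N; (2 * i).+1].
Proof. by rewrite mulnS addnC iotaD add0n. Qed.

Lemma fold_gadgets sg i : (i <= M)%N ->
  foldl absd 0 [seq hn (flipn sg t) | t <- iota 0 (2 * i)] = gv i sg /\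
  \sum_(p <- [seq hn (flipn sg t) | t <- iota 0 (2 * i)]) p = 3 * 2 ^+ i - 3.
Proof.
elim: i => [|i IH] Hi; first by rewrite muln0 /= big_nil expr0; split => //; lra.
have [IH1 IH2] := IH (ltnW Hi).
rewrite iota_pair map_cat foldl_cat big_cat IH1 IH2 /= big_cons big_cons big_nil.
rewrite flipn_even // flipn_odd //.
have /andP [G1 G2] := gv_bound i sg; have P : 0 < (2 : R) ^+ i by rewrite exprn_gt0.
rewrite exprS.
case: (sg i); rewrite ?hn_even ?hn_odd //; split.
- rewrite [absd (gv i sg) _]absd_le; last lra. rewrite absd_le; last lra. lra.
- lra.
- rewrite [absd (gv i sg) _]absd_le; last lra. rewrite absd_ge; last lra. lra.
- lra.
Qed.

Definition Sv : R := 3 * 2 ^+ M - 3 + Aval.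

Lemma BLf_sP sg : BLf hI (sP sg) = (Sv + Aval - gv M sg) / 2.
Proof.
rewrite /BLf /Dl hs_sP -addn1 iotaD add0n map_cat foldl_cat big_cat.
have [-> ->] := fold_gadgets sg (leqnn M).
have /andP [G1 G2] := gv_bound M sg.
move: G1 G2; set g := gv M sg => G1 G2.
rewrite /=.
rewrite big_cons big_nil flipn_last /hn eqxx.
rewrite absd_le; last by rewrite /Aval; lra.
rewrite /Sv; lra.
Qed.

Lemma sum_total : \sum_i hI i = Sv.
Proof.
rewrite -(sum_hs hI (sP (fun _ => false))) hs_sP -addn1 iotaD add0n map_cat big_cat.
have [_ ->] := fold_gadgets (fun _ => false) (leqnn M).
rewrite /=.
by rewrite big_cons big_nil flipn_last /hn eqxx addr0.
Qed.

End Instance.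

Fixpoint path (p : nat) (j : nat) : nat -> bool :=
  if p is p'.+1 then fun i => if i == p then (2 ^ p' <= j)%N
    else path p' (if (j < 2 ^ p')%N then 2 ^ p' - 1 - j else j - 2 ^ p')%N i
  else fun _ => false.

Lemma pathS p j i : path p.+1 j i = if i == p.+1 then (2 ^ p <= j)%N
    else path p (if (j < 2 ^ p)%N then 2 ^ p - 1 - j else j - 2 ^ p)%N i.
Proof. by []. Qed.

Lemma gvS (R : realType) i sg : gv R i.+1 sg = 2 ^+ i + (if sg i then gv R i sg else - gv R i sg).
Proof. by []. Qed.

Lemma gv_path (R : realType) p j : gv R p.+2 (path p.+1 j) =
  2 ^+ p.+1 + (if (2 ^ p <= j)%N then gv R p.+1 (path p (j - 2 ^ p))
               else - gv R p.+1 (path p (2 ^ p - 1 - j))).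
Proof.
rewrite gvS pathS eqxx.
rewrite (@gv_ext R p.+1 (path p.+1 j) (path p (if (j < 2 ^ p)%N then 2 ^ p - 1 - j else j - 2 ^ p)%N)); last first.
  by move=> x Hx; rewrite pathS; have -> : (x == p.+1) = false by apply/eqP; lia.
by case: leqP.
Qed.

Lemma path_inc (R : realType) p j : (j.+1 < 2 ^ p)%N ->
  gv R p.+1 (path p j) < gv R p.+1 (path p j.+1).
Proof.
elim: p j => [|p IH] j Hj; first by rewrite expn0 in Hj.
rewrite !gv_path.
have T : (0 < 2 ^ p)%N by rewrite expn_gt0.
rewrite expnS in Hj.
case: (ltnP j.+1 (2 ^ p)) => H1.
  have A1 : (2 ^ p <= j)%N = false by apply/negbTE; rewrite -ltnNge; lia.
  have A2 : (2 ^ p <= j.+1)%N = false by apply/negbTE; rewrite -ltnNge; lia.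
  rewrite ?A1 ?A2.
  have E : (2 ^ p - 1 - j = (2 ^ p - 1 - j.+1).+1)%N by lia.
  rewrite E ltrD2l ltrN2; apply: IH; lia.
case: (ltnP j (2 ^ p)) => H2.
  have Ej : j = (2 ^ p).-1 by lia.
  rewrite ?H1.
  have -> : (2 ^ p - 1 - j = 0)%N by lia.
  have -> : (j.+1 - 2 ^ p = 0)%N by lia.
  have := gv_pos R p (path p 0); lra.
rewrite ?H2 ?(leq_trans H2 (leqnSn _)).
have -> : (j.+1 - 2 ^ p = (j - 2 ^ p).+1)%N by lia.
rewrite ltrD2l; apply: IH; lia.
Qed.

Lemma path_step p j : (j.+1 < 2 ^ p)%N ->
  exists i0, forall i, i != i0 -> path p j i = path p j.+1 i.
Proof.
elim: p j => [|p IH] j Hj; first by rewrite expn0 in Hj.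
have T : (0 < 2 ^ p)%N by rewrite expn_gt0.
rewrite expnS in Hj.
have [H1|H1] := boolP (j.+1 < 2 ^ p)%N.
  have C1 : (2 ^ p <= j)%N = false by apply/negbTE; rewrite -ltnNge; lia.
  have C2 : (2 ^ p <= j.+1)%N = false by apply/negbTE; rewrite -ltnNge; lia.
  have C3 : (j < 2 ^ p)%N = true by lia.
  have [i0 Hi0] := IH (2 ^ p - 1 - j.+1)%N ltac:(lia).
  exists i0 => i Hi; rewrite !pathS C1 C2 C3 H1; case: eqP => // _.
  have -> : (2 ^ p - 1 - j = (2 ^ p - 1 - j.+1).+1)%N by lia.
  by rewrite Hi0.
have [H2|H2] := boolP (j < 2 ^ p)%N.
  have C1 : (2 ^ p <= j)%N = false by apply/negbTE; rewrite -ltnNge; lia.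
  have C2 : (2 ^ p <= j.+1)%N = true by lia.
  exists p.+1 => i Hi; rewrite !pathS (negbTE Hi) H2 (negbTE H1).
  have -> : (2 ^ p - 1 - j = 0)%N by lia.
  by have -> : (j.+1 - 2 ^ p = 0)%N by lia.
have C1 : (2 ^ p <= j)%N = true by lia.
have C2 : (2 ^ p <= j.+1)%N = true by lia.
have [i0 Hi0] := IH (j - 2 ^ p)%N ltac:(lia).
exists i0 => i Hi; rewrite !pathS C1 C2 (negbTE H1) (negbTE H2); case: eqP => // _.
have -> : (j.+1 - 2 ^ p = (j - 2 ^ p).+1)%N by lia.
by rewrite Hi0.
Qed.

Lemma hs_pos (R : realType) n (h : 'I_n -> R) (s : {perm 'I_n}) :
  (forall i, 0 < h i) -> forall x, x \in hs h s -> 0 < x.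
Proof. by move=> hp x /mapP [u _ ->]. Qed.

Lemma fold_sub (R : realType) (l : seq R) d : (forall x, x \in l -> 0 <= x) ->
  \sum_(p <- l) p <= d -> foldl absd d l = d - \sum_(p <- l) p.
Proof.
elim: l d => [|x l IH] d Hl Hs /=; first by rewrite big_nil subr0.
move: Hs; rewrite big_cons => Hs.
have Hx : 0 <= x by apply: Hl; rewrite mem_head.
have Hl' : forall y, y \in l -> 0 <= y by move=> y Hy; apply: Hl; rewrite in_cons Hy orbT.
have Hsl : 0 <= \sum_(p <- l) p by rewrite big_seq sumr_ge0.
rewrite absd_ge; last lra.
rewrite IH //; [lra|lra].
Qed.

Section Final.
Variables (R : realType) (m : nat).
Local Notation M := m.+1.
Local Notation n := (2 * M).+1.
Local Notation h := (@hI R m).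

Lemma hpos : forall i, 0 < h i.
Proof. by move=> i; apply: hn_pos. Qed.

Definition sF sg : {perm 'I_n} := (tperm ord0 ord_max * sP m sg)%g.

Lemma card_sP sg sg' i0 : (forall i, i != i0 -> sg i = sg' i) ->
  (#|[pred t : 'I_n | sP m sg t != sP m sg' t]| <= 2)%N.
Proof.
move=> E.
have Sub : [pred t : 'I_n | sP m sg t != sP m sg' t] \subset
           [set (inord (2 * i0) : 'I_n); inord (2 * i0).+1].
  apply/subsetP => t; rewrite inE => Ht; rewrite !inE.
  have : flipn m sg t != flipn m sg' t.
    by move: Ht; rewrite !permE; apply: contra => /eqP Ef; apply/eqP/val_inj.
  rewrite /flipn; case Hlt: (t < 2 * M)%N; last by rewrite /= eqxx.
  case: (eqVneq (t %/ 2)%N i0) => Hq.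
    move=> _.
    have [Et|Et] : ((t : nat) = 2 * i0 \/ (t : nat) = (2 * i0).+1)%N by lia.
      by apply/orP; left; apply/eqP/val_inj; rewrite /= inordK; lia.
    by apply/orP; right; apply/eqP/val_inj; rewrite /= inordK; lia.
  by rewrite /= (E _ Hq) eqxx.
apply: leq_trans (subset_leq_card Sub) _.
by rewrite cards2; case: (_ != _).
Qed.

Lemma card_sF sg : (#|[pred t : 'I_n | sP m sg t != sF sg t]| <= 2)%N.
Proof.
have Sub : [pred t : 'I_n | sP m sg t != sF sg t] \subset [set ord0; ord_max].
  apply/subsetP => t; rewrite inE => Ht; rewrite !inE.
  apply/negPn/negP; rewrite negb_or => /andP [H1 H2].
  by move: Ht; rewrite /sF permM tpermD 1?eq_sym // eqxx.
apply: leq_trans (subset_leq_card Sub) _.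
by rewrite cards2; case: (_ != _).
Qed.

Lemma BLf_sF sg : BLf h (sF sg) = Aval R m.
Proof.
have Htot := sum_hs h (sF sg); rewrite sum_total in Htot.
move: Htot; rewrite /BLf /Dl /hs enum_ordSl /=.
have -> : h (sF sg ord0) = Aval R m.
  rewrite /sF permM tpermL permE /hI /= /flipn ltnn /= /hn eqxx //.
set rest := [seq _ | _ <- _].
rewrite big_cons => Hs.
have Hrest : forall x, x \in rest -> 0 <= x.
  move=> x Hx; apply: ltW; apply: (@hs_pos R _ h (sF sg) hpos).
  by rewrite /hs enum_ordSl /= in_cons Hx orbT.
have HA : absd 0 (Aval R m) = Aval R m by rewrite absd_le ?subr0 // /Aval mulr_ge0 ?exprn_ge0.
have aux1 : forall a x : R, (a + x + (a - x)) / 2 = a by move=> a x; field.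
have aux2 : forall a x s : R, a + x = s -> s - a <= a -> x <= a by move=> a x s' H1 H2; lra.
rewrite HA fold_sub //; try exact (aux1 _ _).
apply: (aux2 _ _ _ Hs).
rewrite /Sv /Aval; have : 0 <= (2 : R) ^+ M by rewrite exprn_ge0.
lra.
Qed.

Lemma lopt k sg : local_optimum (W2 R) (@w1 R n) h k (sF sg).
Proof.
move=> s' [_ [H [H' [HB [pos' [B' <-]] Hlt]]]].
move: HB => /(BL_height_iff hpos); rewrite BLf_sF => EH.
have [[_ _ Hy _] _] := B' ((s'^-1)%g ord_max).
rewrite permKV in Hy.
have Hb := @bigmax_ge R n (fun i => (pos' i).2 + h i) (index_enum _) ord_max (mem_index_enum _).
have Hh : h ord_max = Aval R m by rewrite /hI /hn /= eqxx.
move: Hlt; rewrite EH /packing_height => Hlt.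
move: Hb; rewrite /= Hh => Hb.
have : Aval R m < Aval R m.
  apply: (le_lt_trans _ Hlt); apply: le_trans Hb; by rewrite lerDr.
by rewrite ltxx.
Qed.

End Final.

Unset Implicit Arguments.
Set Strict Implicit.

Theorem theorem6 (R : realType) (k : nat) (hk : (2 <= k)%N) :
  exists d : nat, (0 < d)%N /\
  forall N : nat,
    exists (n : nat) (W : R) (w h : 'I_n -> R) (s0 : {perm 'I_n})
           (f : nat -> {perm 'I_n}) (L : nat),
      [/\ (N <= n)%N,
          valid_instance W w h,
          local_search_run W w h k s0 f L &
          (2 ^ n <= L ^ d)%N].
Proof.
exists 5%N; split => // N.
pose m := N.+1.
pose f := fun j => if (j < 2 ^ m)%N then sP m (path m j) else sF m (path m (2 ^ m).-1).
exists (2 * m.+1).+1, (W2 R), (@w1 R _), (@hI R m), (f 0%N), f, (2 ^ m)%N.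
have T : (0 < 2 ^ m)%N by rewrite expn_gt0.
split.
- rewrite /m; lia.
- split; first by rewrite /W2; lra.
  by move=> i; split; [rewrite /w1; lra | split; [rewrite /w1 /W2; lra | exact: hn_pos]].
- split => //; last first.
    by rewrite /f ltnn; apply: lopt.
  move=> i Hi.
  have Hg := gv_bound R m.+1.
  have B2 : (2 : R) <= 2 ^+ m.+1.
    have E1 : (1 : R) <= 2 ^+ m by apply: exprn_ege1; lra.
    rewrite exprS; lra.
  case: (ltnP i.+1 (2 ^ m)) => H1.
    rewrite /f Hi H1; split.
      have [i0 Hi0] := path_step H1.
      apply: (leq_trans _ hk); exact: (card_sP m Hi0).
    exists (BLf (@hI R m) (sP m (path m i))), (BLf (@hI R m) (sP m (path m i.+1))).
    split; [exact/(BL_height_iff (@hpos R m)) | exact/(BL_height_iff (@hpos R m)) |].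
    rewrite !BLf_sP; have := path_inc R H1; lra.
  have Ei : i = (2 ^ m).-1 by lia.
  rewrite /f Hi ltnNge H1 /=; split.
    by rewrite Ei; apply: (leq_trans _ hk); apply: card_sF.
  exists (BLf (@hI R m) (sP m (path m i))), (BLf (@hI R m) (sF m (path m (2 ^ m).-1))).
  split; [exact/(BL_height_iff (@hpos R m)) | exact/(BL_height_iff (@hpos R m)) |].
  rewrite BLf_sF BLf_sP /Sv /Aval.
  have /andP [G1 G2] := Hg (path m i).
  lra.
- rewrite -expnM leq_exp2l //; rewrite /m; lia.
Qed.
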